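(* For a word $w$ over $[n]$, the following are equivalent: (1) $w$ is $n$-complete; (2) $w$ synchronizes every member of $\mathcal{F}(n)$; (3) $w$ synchronizes every member of $\mathcal{F}^+(n)$; (4) $w$ synchronizes every member of $\mathcal{A}(n)$.
   Context: A Boolean network (BN) with component set $[n]$ is $f:\{0,1\}^n\to\{0,1\}^n$; its signed interaction digraph has vertex set $[n]$ and a positive (negative) arc from $j$ to $i$ iff for some $x$ with $x_j=0$, $f_i(x+e_j)-f_i(x)$ is positive (negative). Cycles have no repeated vertices (loops are cycles), signed by the product of arc signs. $\mathcal{A}(n)$: BNs with component set $[n]$ whose interaction digraph is acyclic. $\mathcal{F}(n)$: BNs with component set $[n]$ with a unique fixed point and such that all cycles of the signed interaction digraph have the same sign. $\mathcal{F}^+(n)$: synchronizing BNs with component set $[n]$ whose signed interaction digraph has no negative cycles. A word $u$ contains $v$ if $v$ is obtained by deleting letters of $u$; $w$ is $n$-complete if it contains every permutation of $[n]$. $f^i(x)$ is $x$ with $x_i$ replaced by $f_i(x)$; $f^{i_1\cdots i_\ell}=f^{i_\ell}\circ\cdots\circ f^{i_1}$; $w$ synchronizes $f$ if $f^w$ is constant; $f$ is synchronizing if some word synchronizes it. *)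

(* Defs.v *)
From mathcomp Require Import all_boot.
Set Implicit Arguments. Unset Strict Implicit. Unset Printing Implicit Defensive.

(* Configurations x in {0,1}^n, components indexed by 'I_n (= [n]). *)
Definition conf (n : nat) := {ffun 'I_n -> bool}.

Definition BN (n : nat) := conf n -> conf n.

Definition setc n (x : conf n) (i : 'I_n) (b : bool) : conf n :=
  [ffun k => if k == i then b else x k].

(* Signed arcs of the interaction digraph: arc of sign s (true = positive,
   false = negative) from j to i iff for some x with x_j = 0,
   f_i(x+e_j) - f_i(x) is positive (resp. negative). *)
Definition arc n (f : BN n) (s : bool) (j i : 'I_n) : Prop :=
  exists x : conf n, x j = false /\
    f x i = ~~ s /\ f (setc x j true) i = s.

(* (The default d of nth is irrelevant since indices are in range.) *)
Definition is_cycle n (f : BN n) (vs : seq 'I_n) (ss : seq bool) : Prop :=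
  [/\ 0 < size vs, uniq vs, size ss = size vs &
      forall (t : nat) (d : 'I_n), t < size vs ->
        arc f (nth true ss t) (nth d vs t) (nth d vs ((t.+1) %% size vs))].

Definition cycle_sign (ss : seq bool) : bool := ~~ odd (count negb ss).

Definition fixed_point n (f : BN n) (x : conf n) : Prop := f x = x.

(* Asynchronous update f^i and f^w (f^{i1...il} = f^{il} o ... o f^{i1}). *)
Definition upd n (f : BN n) (i : 'I_n) (x : conf n) : conf n := setc x i (f x i).
Definition upd_word n (f : BN n) (w : seq 'I_n) (x : conf n) : conf n :=
  foldl (fun y i => upd f i y) x w.

Definition synchronizes n (w : seq 'I_n) (f : BN n) : Prop :=
  exists c : conf n, forall x, upd_word f w x = c.
Definition synchronizing n (f : BN n) : Prop := exists w, synchronizes w f.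

Definition in_A n (f : BN n) : Prop := forall vs ss, ~ is_cycle f vs ss.
Definition in_F n (f : BN n) : Prop :=
  (exists! x, fixed_point f x) /\
  (forall vs ss vs' ss', is_cycle f vs ss -> is_cycle f vs' ss' ->
     cycle_sign ss = cycle_sign ss').
Definition in_Fplus n (f : BN n) : Prop :=
  synchronizing f /\ (forall vs ss, is_cycle f vs ss -> cycle_sign ss = true).

(* Containment of words = subsequence; a permutation of [n] is a duplicate-free
   word of length n. *)
Definition complete n (w : seq 'I_n) : Prop :=
  forall p : seq 'I_n, uniq p -> size p = n -> subseq p w.

(* Main.v *)
Require Import Defs.
From mathcomp Require Import all_boot.
From mathcomp Require Import zify.
From Stdlib Require Import Classical.
Set Implicit Arguments. Unset Strict Implicit. Unset Printing Implicit Defensive.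

Section Walks.
Variable n : nat.
Variable f : BN n.

Definition N (sg : nat -> bool) p := count (fun t => ~~ sg t) (iota 0 p).

Definition CW (E : bool -> 'I_n -> 'I_n -> Prop) (h : nat -> 'I_n) (sg : nat -> bool) p :=
  [/\ 0 < p, h p = h 0 & forall t, t < p -> E (sg t) (h t) (h t.+1)].

Lemma count_shift (P : pred nat) a m :
  count (fun t => P (a + t)) (iota 0 m) = count P (iota a m).
Proof. by rewrite -{2}(addn0 a) iotaDl count_map. Qed.

Lemma cw_decomp E : forall p h sg, CW E h sg p ->
  exists p' h' sg', [/\ CW E h' sg' p', uniq (mkseq h' p') &
                     (odd (N sg p) -> odd (N sg' p'))].
Proof.
move=> p; elim: p {-2}p (leqnn p) => [|m IH] p hp h sg cw.
  by case: cw; rewrite lt0n; move: hp; rewrite leqn0 => ->.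
have [U|] := boolP (uniq (mkseq h p)); first by exists p, h, sg.
case/(uniqPn (h 0)) => a [b []]; rewrite size_mkseq => ab bp.
rewrite !nth_mkseq //; last by lia.
move=> hab; case: cw => p0 hp0 har.
pose h1 t := h (a + t); pose sg1 t := sg (a + t); pose p1 := b - a.
have cw1 : CW E h1 sg1 p1.
  split; first by rewrite /p1; lia.
    by rewrite /h1 /p1 subnKC ?addn0 //; lia.
  by move=> t tp; rewrite /h1 /sg1 addnS; apply: har; rewrite /p1 in tp; lia.
pose h2 t := if t < a then h t else h (t + (b - a)).
pose sg2 t := if t < a then sg t else sg (t + (b - a)).
pose p2 := p - (b - a).
have cw2 : CW E h2 sg2 p2.
  split; first by rewrite /p2; lia.
    rewrite /h2 /p2; have -> : (p - (b - a) < a) = false by lia.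
    rewrite subnK; last by lia.
    rewrite hp0; case: ifP => // a0; have a00 : a = 0 by lia.
    by rewrite add0n a00 subn0 -hab a00.
  move=> t tp; rewrite /h2 /sg2 /p2 in tp *.
  case: (ltnP t.+1 a) => ta.
    by rewrite (ltnW ta); apply: har; lia.
  case: (ltnP t a) => ta'.
    have ea : t.+1 = a by lia.
    rewrite ea subnKC; last by lia.
    by rewrite -hab -ea; apply: har; lia.
  by rewrite addSn; apply: har; lia.
have Nsplit : N sg p = N sg1 p1 + N sg2 p2.
  rewrite /N /sg1 /sg2 /p1 /p2 (count_shift (fun t => ~~ sg t)).
  have -> : p = a + (b - a) + (p - b) by lia.
  rewrite !iotaD !count_cat add0n.
  have -> : a + (b - a) + (p - b) - (b - a) = a + (p - b) by lia.
  rewrite iotaD count_cat add0n.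
  have -> : count (fun t => ~~ (if t < a then sg t else sg (t + (b - a)))) (iota 0 a)
          = count (fun t => ~~ sg t) (iota 0 a).
    by apply: eq_in_count => t; rewrite mem_iota add0n => /andP[_ ->].
  have -> : count (fun t => ~~ (if t < a then sg t else sg (t + (b - a)))) (iota a (p - b))
          = count (fun t => ~~ sg (t + (b - a))) (iota a (p - b)).
    by apply: eq_in_count => t; rewrite mem_iota => /andP[ta _]; rewrite ltnNge ta.
  have -> : a + (b - a) = b by lia.
  have -> : count (fun t => ~~ sg (t + (b - a))) (iota a (p - b))
          = count (fun t => ~~ sg t) (iota b (p - b)).
    have -> : b = b - a + a by lia.
    rewrite iotaDl count_map; apply: eq_count => t /=; rewrite addnC.
    by have -> : b - a + a - a = b - a by lia.
  lia.
have l1 : p1 <= m by rewrite /p1; lia.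
have l2 : p2 <= m by rewrite /p2; lia.
have [o2|e2] := boolP (odd (N sg2 p2)).
  have [p' [h' [sg' [c' u' o']]]] := IH _ l2 _ _ cw2.
  by exists p', h', sg'; split => // _; apply: o'.
have [p' [h' [sg' [c' u' o']]]] := IH _ l1 _ _ cw1.
exists p', h', sg'; split => // o; apply: o'.
by move: o; rewrite Nsplit oddD (negbTE e2) addbF.
Qed.

Lemma cw_mono (E E' : bool -> 'I_n -> 'I_n -> Prop) h sg p :
  (forall s j i, E s j i -> E' s j i) -> CW E h sg p -> CW E' h sg p.
Proof. by move=> EE [? ? H]; split => // t /H /EE. Qed.

Lemma cw_cycle h sg p : CW (fun s j i => Defs.arc f s j i) h sg p -> uniq (mkseq h p) ->
  is_cycle f (mkseq h p) (mkseq sg p) /\ cycle_sign (mkseq sg p) = ~~ odd (N sg p).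
Proof.
case=> p0 hp har U; split.
  split; rewrite ?size_mkseq //.
  move=> t d tp; rewrite !nth_mkseq //; last by apply: ltn_pmod.
  case: (ltnP t.+1 p) => tp'.
    by rewrite modn_small //; apply: har.
  have e : t.+1 = p by lia.
  by rewrite e modnn -hp -e; apply: har.
by rewrite /cycle_sign /N /mkseq count_map.
Qed.

End Walks.

Lemma setcE n (x : conf n) j b k : setc x j b k = if k == j then b else x k.
Proof. by rewrite /setc ffunE. Qed.

Lemma setc_id n (x : conf n) j : setc x j (x j) = x.
Proof. by apply/ffunP => k; rewrite setcE; case: eqP => // ->. Qed.

Lemma setc_setc n (x : conf n) j a b : setc (setc x j a) j b = setc x j b.
Proof. by apply/ffunP => k; rewrite !setcE; case: eqP. Qed.

Lemma setc_same n (x : conf n) j b : setc x j b j = b.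
Proof. by rewrite setcE eqxx. Qed.

Section Restr.
Variable n : nat.
Variable f : BN n.
Variable P : {set 'I_n}.
Variable t : conf n.

Definition inC (x : conf n) := forall j, j \in P -> x j = t j.

Definition rarc s j i := [/\ j \notin P, i \notin P &
  exists x, [/\ inC x, x j = false, f x i = ~~ s & f (setc x j true) i = s]].

Lemma rarc_arc s j i : rarc s j i -> Defs.arc f s j i.
Proof. by case=> _ _ [x [_ ? ? ?]]; exists x. Qed.

Inductive Wk : 'I_n -> 'I_n -> bool -> Prop :=
| Wk0 v : Wk v v true
| WkS s u j v b : rarc s u j -> Wk j v b -> Wk u v (s == b).

Lemma Wk_cat u v w b c : Wk u v b -> Wk v w c -> Wk u w (b == c).
Proof.
elim=> [v' //|s u' j v' b' a _ IH] /IH H.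
have e : (s == b') == c = (s == (b' == c)) by case: s {a}; case: b' {IH H}; case: c. 
by rewrite e; apply: WkS a H.
Qed.

Lemma Wk_CW u v b : Wk u v b -> exists p h sg,
  [/\ h 0 = u, h p = v, (forall t, t < p -> rarc (sg t) (h t) (h t.+1)) &
      b = ~~ odd (N sg p)].
Proof.
elim=> [v' | s u' j v' b' a _ [p [h [sg [h0 hp har hb]]]]].
  by exists 0, (fun _ => v'), (fun _ => true).
exists p.+1, (fun t => if t is t'.+1 then h t' else u'),
  (fun t => if t is t'.+1 then sg t' else s); split => //.
  by case=> [|k] kp /=; [rewrite h0 | apply: har].
rewrite /N /= -(count_shift (fun t => ~~ (if t is t'.+1 then sg t' else s))) /=.
rewrite hb /N; under [in RHS]eq_count => k do rewrite add0n. rewrite oddD oddb. by case: s {a}; case: (odd (count _ _)).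
Qed.

Definition NN := forall vs ss, is_cycle f vs ss -> cycle_sign ss = true.

Lemma Wk_neg u : NN -> Wk u u false -> False.
Proof.
move=> nn /Wk_CW [p [h [sg [h0 hp har hb]]]].
have o : odd (N sg p) by move: hb; case: (odd _).
have cw : CW rarc h sg p.
  split; last by [].
    by case: p {har hp hb} o.
  by rewrite hp h0.
have [p' [h' [sg' [cw' u' o']]]] := cw_decomp cw.
have [cy sgn] := cw_cycle (cw_mono rarc_arc cw') u'.
by have := nn _ _ cy; rewrite sgn (o' o).
Qed.

Lemma flip i z x : i \notin P -> inC z -> inC x -> f x i != f z i ->
  exists j, rarc (z j == f z i) j i.
Proof.
move=> iP Cz.
move: {2}#|[set k | x k != z k]| (leqnn #|[set k | x k != z k]|) => d.
elim: d x => [|d IH] x dx Cx fx.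
  have xz : x = z.
    apply/ffunP => k; apply/eqP; apply: contraTT dx => xk.
    by rewrite -ltnNge card_gt0; apply/set0Pn; exists k; rewrite inE.
  by rewrite xz eqxx in fx.
have [j xj] : exists j, x j != z j.
  case: (pickP (fun k => x k != z k)) => [j xj | H]; first by exists j.
  have xz : x = z by apply/ffunP => k; move/negbFE: (H k) => /eqP.
  by rewrite xz eqxx in fx.
have jP : j \notin P.
  by apply: contra xj => jP; rewrite Cx // Cz.
pose x' := setc x j (z j).
have Cx' : inC x'.
  by move=> k kP; rewrite /x' setcE; case: eqP => [e|_]; [rewrite -e Cz | rewrite Cx].
have dx' : #|[set k | x' k != z k]| <= d.
  have -> : [set k | x' k != z k] = [set k | x k != z k] :\ j.
    apply/setP => k; rewrite !inE /x' setcE; case: (k =P j) => [->|_]; by rewrite ?eqxx.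
  move: dx; rewrite (cardsD1 j [set k | x k != z k]) inE xj; lia.
have [fx'|fx'] := boolP (f x' i != f z i); first by apply: IH fx'.
move/negbNE/eqP: fx' => fx'.
exists j; split => //.
case zj: (z j) xj => xj.
  have xj0 : x j = false by case: (x j) xj.
  exists x; split => //.
    by move: fx; case: (f x i); case: (f z i).
  have -> : setc x j true = x' by rewrite /x' zj.
  by rewrite fx'; case: (f z i).
have xj1 : x j = true by case: (x j) xj.
exists x'; split => //.
- by rewrite /x' setc_same.
- by rewrite fx'; case: (f z i).
- rewrite /x' setc_setc -xj1 setc_id.
  by move: fx; case: (f x i); case: (f z i).
Qed.

End Restr.

Lemma pigeon n (g : 'I_n -> 'I_n) x :
  exists a b, [/\ a < b, b <= n & iter a g x = iter b g x].
Proof.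
have : ~~ uniq (mkseq (fun k => iter k g x) n.+1).
  apply/negP => U.
  have := uniq_leq_size U (fun y _ => mem_enum predT y).
  by rewrite size_mkseq size_enum_ord ltnn.
case/(uniqPn x) => a [b []]; rewrite size_mkseq => ab bn.
rewrite !nth_mkseq //; last by lia.
by exists a, b; split.
Qed.

Lemma fun_CW n (E : bool -> 'I_n -> 'I_n -> Prop) (Q : pred 'I_n) g sg0 x :
  Q x -> (forall i, Q i -> Q (g i) /\ E (sg0 i) (g i) i) ->
  exists p h sg, CW E h sg p.
Proof.
move=> Qx HQ.
have Qk : forall k, Q (iter k g x).
  by elim=> [|k IH] //=; case: (HQ _ IH).
have [a [b [ab bn hab]]] := pigeon g x.
exists (b - a), (fun t => iter (b - t) g x), (fun t => sg0 (iter (b - t.+1) g x)).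
split; first by lia.
  by rewrite subn0 subKn ?hab //; lia.
move=> k kp.
have -> : b - k = (b - k.+1).+1 by lia.
by case: (HQ _ (Qk (b - k.+1))).
Qed.

Section SCC.
Variable n : nat.
Variable f : BN n.
Variable P : {set 'I_n}.
Variable t : conf n.

Definition inCb (x : conf n) := [forall k in P, x k == t k].
Lemma inCbP x : reflect (inC P t x) (inCb x).
Proof.
apply: (iffP forall_inP) => H k kP; first by apply/eqP; apply: H.
by apply/eqP; apply: H.
Qed.

Definition e : rel 'I_n := fun j i => (j \notin P) && (i \notin P) &&
  [exists x : conf n, inCb x && (x j == false) && (f x i != f (setc x j true) i)].

Lemma eP j i : e j i -> exists s, rarc f P t s j i.
Proof.
case/andP => /andP [jP iP] /existsP [x /andP [/andP [/inCbP Cx /eqP xj] fx]].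
exists (f (setc x j true) i); split => //; exists x; split => //.
by move: fx; case: (f x i); case: (f _ i).
Qed.

Lemma rarc_e s j i : rarc f P t s j i -> e j i.
Proof.
case=> jP iP [x [Cx xj fx fx']]; rewrite /e jP iP /=.
apply/existsP; exists x; apply/andP; split; first by apply/andP; split; [apply/inCbP|apply/eqP].
by rewrite fx fx'; case: s {fx fx'}.
Qed.

Lemma connect_Wk u v : connect e u v -> exists b, Wk f P t u v b.
Proof.
case/connectP => p; elim: p u => [|w p IH] u /=.
  by move=> _ ->; exists true; apply: Wk0.
case/andP => /eP [s a] pa /(IH _ pa) [b W].
by exists (s == b); apply: WkS a W.
Qed.

Lemma connect_notin j r : connect e j r -> r \notin P -> j \notin P.
Proof.
case/connectP => [[|w p]] /=; first by move=> _ ->.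
by case/andP => /andP [/andP [jP _] _] _.
Qed.

Hypothesis nn : NN f.

Section Source.
Variable r : 'I_n.
Hypothesis rP : r \notin P.
Hypothesis src : forall j, connect e j r -> connect e r j.
Let S := [set j | connect e j r].

Lemma S_notin k : k \in S -> k \notin P.
Proof. by rewrite inE => /connect_notin; apply. Qed.

Lemma S_closed s j i : rarc f P t s j i -> i \in S -> j \in S.
Proof.
move=> /rarc_e eji; rewrite !inE => ir.
by apply: connect_trans ir; apply: connect1.
Qed.

Lemma Wk_uniq i b1 b2 : i \in S -> Wk f P t r i b1 -> Wk f P t r i b2 -> b1 = b2.
Proof.
rewrite inE => /connect_Wk [c W] W1 W2.
have c1 := Wk_cat W1 W; have c2 := Wk_cat W2 W.
case E1 : (b1 == c) c1 => c1; last by case: (Wk_neg nn c1).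
case E2 : (b2 == c) c2 => c2; last by case: (Wk_neg nn c2).
by move/eqP: E1 => ->; move/eqP: E2 => ->.
Qed.

Lemma balance : exists s : 'I_n -> bool, forall sg j i, j \in S -> i \in S ->
  rarc f P t sg j i -> sg = (s j == s i).
Proof.
have : forall i, exists b, i \in S -> Wk f P t r i b.
  move=> i; case: (boolP (i \in S)) => iS; last by exists true.
  have [b W] : exists b, Wk f P t r i b.
    by apply: connect_Wk; apply: src; rewrite inE in iS.
  by exists b.
case/fin_all_exists => s Hs; exists s => sg j i jS iS a.
have W1 := Wk_cat (Hs j jS) (WkS a (Wk0 f P t i)).
rewrite eqb_id in W1.
have := Wk_uniq iS W1 (Hs i iS).
by move: a W1; case: (s j); case: (s i); case: sg.
Qed.

Lemma mon (s : 'I_n -> bool) i y :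
  (forall sg j i, j \in S -> i \in S -> rarc f P t sg j i -> sg = (s j == s i)) ->
  i \in S -> (forall c, exists x, inC P t x /\ f x i != c) ->
  inC P t y -> (forall k, k \in S -> y k = s k) -> f y i = s i.
Proof.
move=> bal iS nc Cy yS; apply/eqP; apply: contraT => fy.
have [x [Cx fx]] := nc (f y i).
have [j a] := flip (S_notin iS) Cy Cx fx.
have jS := S_closed a iS.
have := bal _ _ _ jS iS a; rewrite (yS _ jS).
by move: fy; case: (f y i); case: (s i); case: (s j).
Qed.

End Source.

Lemma scc_step : (exists r0, r0 \notin P) ->
  (forall i, i \notin P -> forall c, exists x, inC P t x /\ f x i != c) ->
  exists (S : {set 'I_n}) (s : 'I_n -> bool), [/\ S != set0,
    (forall k, k \in S -> k \notin P) &
    forall (neg : bool) y, inC P t y -> (forall k, k \in S -> y k = s k (+) neg) ->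
      forall i, i \in S -> f y i = s i (+) neg].
Proof.
move=> [r0 r0P] nc.
pose Anc r := [set j | connect e j r].
have [r rP rmin] := @arg_minnP _ r0 (fun r => r \notin P) (fun r => #|Anc r|) r0P.
have src : forall j, connect e j r -> connect e r j.
  move=> j jr; have jP := connect_notin jr rP.
  have sub : Anc j \subset Anc r.
    by apply/subsetP => k; rewrite !inE => kj; apply: connect_trans kj jr.
  have : Anc j == Anc r by rewrite eqEcard sub rmin.
  move/eqP => E; have : r \in Anc j by rewrite E inE connect0.
  by rewrite inE.
have [s bal] := balance src.
exists [set j | connect e j r], s; split.
- by apply/set0Pn; exists r; rewrite inE connect0.
- by move=> k; apply: S_notin.
move=> neg y Cy yS i iS.
apply: (@mon r rP (fun k => s k (+) neg)) => //.
- by move=> sg j i' jS i'S a; rewrite (bal _ _ _ jS i'S a); clear; case: neg; case: (s j); case: (s i').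
- by apply: nc; apply: S_notin iS.
Qed.

End SCC.

Lemma nonconst n (f : BN n) (P : {set 'I_n}) (t : conf n) :
  ~ (exists i c, i \notin P /\ forall x, inC P t x -> f x i = c) ->
  forall i, i \notin P -> forall c, exists x, inC P t x /\ f x i != c.
Proof.
move=> nc i iP c; apply: NNPP => H; apply: nc; exists i, c; split => // x Cx.
apply/eqP; apply: NNPP => H'; apply: H; exists x; split => //; exact/negP.
Qed.

Lemma all_or_ex n (P : {set 'I_n}) : (forall i, i \in P) \/ exists r0, r0 \notin P.
Proof. by case: (boolP [forall i, i \in P]) => [/forallP|/forallPn]; [left|right]. Qed.

Lemma exists_fp n (f : BN n) : NN f -> forall P t,
  exists y, inC P t y /\ forall i, i \notin P -> f y i = y i.
Proof.
move=> nn P t; move: {2}(n - #|P|) (leqnn (n - #|P|)) => d.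
elim: d P t => [|d IH] P t hd.
  have [all|[r0 r0P]] : (forall i, i \in P) \/ exists r0, r0 \notin P.
    by apply: all_or_ex.
    by exists t; split => // i; rewrite all.
  have : P \proper setT by rewrite properT; apply/eqP => E; rewrite E inE in r0P.
  move/proper_card; rewrite cardsT card_ord; lia.
have [all|[r0 r0P]] : (forall i, i \in P) \/ exists r0, r0 \notin P.
  by apply: all_or_ex.
  by exists t; split => // i; rewrite all.
have [[i [c [iP ic]]] | nc] := classic (exists i c, i \notin P /\ forall x, inC P t x -> f x i = c).
  have hd' : n - #|i |: P| <= d.
    have := max_card (mem (i |: P)); rewrite cardsU1 iP card_ord; lia.
  have [y [Cy Fy]] := IH _ (setc t i c) hd'.
  have CyP : inC P t y.
    move=> k kP; rewrite (Cy k) ?inE ?kP ?orbT // setcE.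
    by case: eqP => // e; move: kP; rewrite e (negbTE iP).
  exists y; split => // i' i'P.
  case: (i' =P i) => [->|ne].
    by rewrite (ic _ CyP) (Cy i) ?setU11 // setc_same.
  by apply: Fy; rewrite !inE negb_or i'P andbT; apply/eqP.
have [S [s [S0 Snot H]]] := scc_step nn (ex_intro _ r0 r0P) (nonconst nc).
pose t' : conf n := [ffun k => if k \in S then s k else t k].
have hd' : n - #|S :|: P| <= d.
  have : P \proper S :|: P.
    apply/properP; split; first by apply: subsetUr.
    case/set0Pn: S0 => k kS; exists k; first by rewrite inE kS.
    by apply: Snot.
  move/proper_card; have := max_card (mem (S :|: P)); rewrite card_ord; lia.
have [y [Cy Fy]] := IH _ t' hd'.
have CyP : inC P t y.
  move=> k kP; rewrite (Cy k) ?inE ?kP ?orbT // /t' ffunE.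
  by case: ifP => // kS; have := Snot _ kS; rewrite kP.
exists y; split => // i iP.
case: (boolP (i \in S)) => iS.
  have yS : forall k, k \in S -> y k = s k (+) false.
    by move=> k kS; rewrite addbF (Cy k) ?inE ?kS // /t' ffunE kS.
  by rewrite (H false y CyP yS i iS) yS.
by apply: Fy; rewrite inE negb_or iS.
Qed.

Definition forcing n (f : BN n) (pi : seq 'I_n) (t : conf n) :=
  forall i, i \in pi -> forall x : conf n,
    (forall j, j \in take (index i pi) pi -> x j = t j) -> f x i = t i.

Lemma upd_pres n (f : BN n) (pi : seq 'I_n) (t : conf n) (pre suf : seq 'I_n) (i : 'I_n) (x : conf n) : uniq pi -> forcing f pi t -> pi = pre ++ suf ->
  (forall j, j \in pre -> x j = t j) -> forall j, j \in pre -> upd f i x j = t j.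
Proof.
move=> U F E Hx j jp; rewrite /upd setcE; case: (j =P i) => [<-|_]; last by apply: Hx.
apply: F; first by rewrite E mem_cat jp.
move=> k; rewrite E index_cat jp take_cat index_mem jp => /mem_take; apply: Hx.
Qed.
Arguments upd_pres {n f pi t pre suf i x}.

Lemma sync n (f : BN n) (pi : seq 'I_n) (t : conf n) : uniq pi -> forcing f pi t ->
  forall (w pre suf : seq 'I_n) (x : conf n), pi = pre ++ suf -> (forall j, j \in pre -> x j = t j) ->
  subseq suf w -> forall j, j \in pi -> upd_word f w x j = t j.
Proof.
move=> U F; elim=> [|i w IH] pre suf x E Hx.
  by rewrite subseq0 => /eqP se j; rewrite E se cats0 /=; apply: Hx.
case: suf E => [|a suf] E /=.
  move=> _; apply: (IH pre [::]) => //; last exact: sub0seq.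
  by apply: (upd_pres U F E Hx).
case: (a =P i) => [ea|_] ss.
  apply: (IH (rcons pre a) suf) => //; first by rewrite cat_rcons.
  move=> j; rewrite mem_rcons inE; case/orP => [/eqP ->|jp].
    rewrite -ea /upd setc_same; apply: F; first by rewrite E mem_cat inE eqxx orbT.
    have ap : a \notin pre by move: U; rewrite E cat_uniq /= => /and3P [_ /norP [] ].
    rewrite E index_cat (negbTE ap) /= eqxx addn0 take_size_cat //.
  by apply: (upd_pres U F E Hx).
apply: (IH pre (a :: suf)) => //.
by apply: (upd_pres U F E Hx).
Qed.

Lemma covers n (pi : seq 'I_n) : uniq pi -> size pi = n -> forall j, j \in pi.
Proof.
move=> U s j; apply: NNPP => /negP jp.
have : uniq (j :: pi) by rewrite /= jp.
move/uniq_leq_size => /(_ (enum 'I_n)) H.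
have := H (fun y _ => mem_enum predT y); rewrite /= s size_enum_ord; lia.
Qed.

Lemma sync_all n (f : BN n) (pi : seq 'I_n) (t : conf n) w : uniq pi -> size pi = n -> forcing f pi t ->
  complete w -> synchronizes w f.
Proof.
move=> U s F C; exists t => x; apply/ffunP => j.
by apply: (sync U F (pre := [::]) (suf := pi)) => //; [apply: C | apply: covers].
Qed.

Definition Ext n (f : BN n) := forall pi t, uniq pi -> forcing f pi t -> size pi < n ->
  exists i c, i \notin pi /\ forall x, inC [set j in pi] t x -> f x i = c.

Lemma build n (f : BN n) : Ext f -> exists pi t, [/\ uniq pi, size pi = n & forcing f pi t].
Proof.
move=> X.
suff : forall k, k <= n -> exists pi t, [/\ uniq pi, size pi = k & forcing f pi t].
  by apply.
elim=> [|k IH] kn.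
  by exists [::], [ffun _ => false]; split.
have [pi [t [U s F]]] := IH (ltnW kn).
have ks : size pi < n by rewrite s.
have [i [c [ip ic]]] := X pi t U F ks.
exists (rcons pi i), (setc t i c); split.
- by rewrite rcons_uniq ip U.
- by rewrite size_rcons s.
move=> a; rewrite mem_rcons inE => /orP [/eqP ->|ap] x Hx.
  rewrite setc_same; apply: ic => m; rewrite inE => kp.
  rewrite (Hx m); last by rewrite -cats1 index_cat (negbTE ip) /= eqxx addn0 take_size_cat.
  by rewrite setcE; case: eqP => // e; move: kp; rewrite e (negbTE ip).
have ai : a != i by apply: contraNneq ip => <-.
rewrite setcE (negbTE ai); apply: F => // m kt.
have := Hx m; rewrite -cats1 index_cat ap take_cat index_mem ap => /(_ kt).
rewrite setcE; case: eqP => // e; have := mem_take kt; rewrite e => ip'.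
by rewrite ip' in ip.
Qed.

Lemma telescope (a : nat -> bool) p :
  odd (count (fun t => ~~ (a t == a t.+1)) (iota 0 p)) = a 0 (+) a p.
Proof.
elim: p => [|p IH]; first by rewrite /= addbb.
rewrite -addn1 iotaD count_cat oddD IH add0n /= addn0 addn1.
by case: (a 0); case: (a p); case: (a p.+1).
Qed.

Lemma exists_out n (pi : seq 'I_n) : uniq pi -> size pi < n -> exists r0, r0 \notin pi.
Proof.
move=> U sp; apply: NNPP => H.
have sub : forall j, j \in enum 'I_n -> j \in pi.
  move=> j _; apply/negPn/negP => jp; apply: H; by exists j.
have := uniq_leq_size (enum_uniq _) sub; rewrite size_enum_ord; by rewrite leqNgt sp.
Qed.

Lemma nc_of n (f : BN n) (pi : seq 'I_n) (t : conf n) :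
  ~ (exists i c, i \notin pi /\ forall x, inC [set j in pi] t x -> f x i = c) ->
  forall i, i \notin [set j in pi] -> forall c, exists x, inC [set j in pi] t x /\ f x i != c.
Proof.
move=> nc; apply: nonconst => [[i [c [iP ic]]]]; apply: nc; exists i, c; split => //.
by rewrite inE in iP.
Qed.

Lemma ext_A n (f : BN n) : in_A f -> Ext f.
Proof.
move=> A pi t U F sp.
have [r0 r0P] := exists_out U sp.
apply: NNPP => nc; have nc2 := nc_of nc.
set P := [set j in pi] in nc2.
have : forall i, exists js : 'I_n * bool, i \notin P -> rarc f P t js.2 js.1 i.
  move=> i; case: (boolP (i \in P)) => iP; first by exists (i, true).
  have [x [Cx fx]] := nc2 i iP (f t i).
  have [j a] := flip iP (fun _ _ => erefl) Cx fx.
  by exists (j, (t j == f t i)).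
case/fin_all_exists => g Hg.
have r0P' : r0 \notin P by rewrite inE.
have [p [h [sg cw]]] := @fun_CW n (Defs.arc f) (fun i => i \notin P) (fun i => (g i).1)
   (fun i => (g i).2) r0 r0P' (fun i iP => let: And3 a1 _ _ as a := Hg i iP in conj a1 (rarc_arc a)).
have [p' [h' [sg' [cw' u' _]]]] := cw_decomp cw.
have [cy _] := cw_cycle cw' u'.
by case: (A _ _ cy).
Qed.

Lemma fix_upd_word n (f : BN n) x w : fixed_point f x -> upd_word f w x = x.
Proof.
move=> fx; have ux : forall i, upd f i x = x by move=> i; rewrite /upd fx setc_id.
elim: w => [|i w IH] //.
by rewrite /upd_word /= ux; exact: IH.
Qed.

Lemma forcing_fix n (f : BN n) pi t z : forcing f pi t -> fixed_point f z ->
  forall j, j \in pi -> z j = t j.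
Proof.
move=> F fz.
suff H : forall m j, j \in pi -> index j pi < m -> z j = t j.
  by move=> j jp; apply: (H (index j pi).+1).
elim=> [|m IH] j jp // jm.
rewrite -{1}fz; apply: F => // k kt.
by apply: IH; [apply: mem_take kt | have := index_ltn kt; lia].
Qed.

Lemma ext_F n (f : BN n) : in_F f -> Ext f.
Proof.
move=> [[z [zfix zuniq]] sgn] pi t U F sp.
have [r0 r0P] := exists_out U sp.
apply: NNPP => nc; have nc2 := nc_of nc.
set P := [set j in pi] in nc2.
have r0P' : r0 \notin P by rewrite inE.
have Cz : inC P t z by move=> j; rewrite inE; apply: (forcing_fix F zfix).
case: (classic (NN f)) => [nn | nneg].
  have [S [s [S0 Snot H]]] := scc_step nn (ex_intro _ r0 r0P') nc2.
  case/set0Pn: S0 => r rS.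
  have fp : forall neg, exists y, fixed_point f y /\ y r = s r (+) neg.
    move=> neg; pose t' : conf n := [ffun k => if k \in S then s k (+) neg else t k].
    have [y [Cy Fy]] := exists_fp nn (S :|: P) t'.
    have CyP : inC P t y.
      move=> k kP; rewrite (Cy k); last by rewrite inE kP orbT.
      rewrite /t' ffunE.
      by case: ifP => // kS; have := Snot _ kS; rewrite kP.
    have yS : forall k, k \in S -> y k = s k (+) neg.
      by move=> k kS; rewrite (Cy k) ?inE ?kS // /t' ffunE kS.
    exists y; split; last by apply: yS.
    apply/ffunP => i.
    case: (boolP (i \in pi)) => ip.
      have iP : i \in P by rewrite inE.
      rewrite (CyP i iP); apply: F => // k kt; apply: CyP; rewrite inE; apply: mem_take kt.
    case: (boolP (i \in S)) => iS; first by rewrite (H neg y CyP yS i iS) yS.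
    by apply: Fy; rewrite !inE negb_or iS.
  have [y1 [f1 e1]] := fp false; have [y2 [f2 e2]] := fp true.
  have E1 := zuniq _ f1; have E2 := zuniq _ f2.
  by move: e1 e2; rewrite -E1 -E2 => ->; case: (s r).
have [vs [ss [cy cyneg]]] : exists vs ss, is_cycle f vs ss /\ cycle_sign ss = false.
  apply: NNPP => H; apply: nneg => vs ss cy; apply: NNPP => H'; apply: H.
  by exists vs, ss; split => //; move/negP: H'; case: (cycle_sign ss).
have : forall i, exists j, i \notin P -> rarc f P t (z j == z i) j i.
  move=> i; case: (boolP (i \in P)) => iP; first by exists i.
  have [x [Cx fx]] := nc2 i iP (z i).
  have zfi : f z i = z i by rewrite zfix.
  rewrite -zfi in fx.
  have [j a] := flip iP Cz Cx fx.
  by exists j; rewrite zfi in a.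
case/fin_all_exists => g Hg.
pose E s j i := Defs.arc f s j i /\ s = (z j == z i).
have [p [h [sg cw]]] := @fun_CW n E (fun i => i \notin P) g
   (fun i => z (g i) == z i) r0 r0P' (fun i iP => let: And3 a1 _ _ as a := Hg i iP in conj a1 (conj (rarc_arc a) erefl)).
have [p' [h' [sg' [cw' u' _]]]] := cw_decomp cw.
have [cy' sg1] := cw_cycle (cw_mono (fun _ _ _ => @proj1 _ _) cw') u'.
have : odd (N sg' p') = false.
  case: cw' => _ hp har.
  rewrite /N -(eq_in_count (a1 := fun t => ~~ (z (h' t) == z (h' t.+1)))).
    by rewrite telescope hp addbb.
  by move=> k; rewrite mem_iota add0n => kp; case: (har k kp) => _ ->.
move=> o; rewrite o in sg1.
by have := sgn _ _ _ _ cy' cy; rewrite sg1 cyneg.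
Qed.

Lemma Fplus_F n (f : BN n) : in_Fplus f -> in_F f.
Proof.
move=> [[w0 [c Hc]] pos]; split; last by move=> vs ss vs' ss' /pos -> /pos ->.
have [y [_ Fy]] := exists_fp pos set0 [ffun _ => false].
have fy : fixed_point f y by apply/ffunP => i; apply: Fy; rewrite inE.
exists y; split => // x fx.
by rewrite -(fix_upd_word w0 fy) -(fix_upd_word w0 fx) !Hc.
Qed.

Lemma fwd n (f : BN n) (w : seq 'I_n) : complete w -> Ext f -> synchronizes w f.
Proof.
move=> C X; have [pi [t [U s F]]] := build X.
by apply: (sync_all U s F C).
Qed.

Section Counter.
Variable n : nat.
Variable p : seq 'I_n.
Hypothesis U : uniq p.
Hypothesis sp : size p = n.

Definition pnet : BN n :=
  fun x => [ffun i => if index i p is k.+1 then x (nth i p k) else true].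

Lemma pnetE x i : pnet x i = if index i p is k.+1 then x (nth i p k) else true.
Proof. by rewrite /pnet ffunE. Qed.

Lemma cov j : j \in p.
Proof. exact: covers U sp j. Qed.

Lemma pnet_arc s j i : Defs.arc pnet s j i -> index i p = (index j p).+1.
Proof.
move=> [x [xj [h1 h2]]]; move: h1 h2; rewrite !pnetE.
case E: (index i p) => [|k].
  by move=> h1 h2; rewrite -h2 in h1.
move=> h1; rewrite setcE; case: eqP => [e|_] h2; last by rewrite h2 in h1; case: s h1 h2.
have kp : k < size p.
  by have := cov i; rewrite -index_mem E => /ltnW.
by rewrite -e index_uniq.
Qed.

Lemma pnet_A : in_A pnet.
Proof.
move=> [|d vs] ss [] //= _ _ sz H.
set V := d :: vs in H.
have Hm : forall m, m < size V -> index (nth d V m) p = index d p + m.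
  elim=> [|m IH] mk; first by rewrite addn0.
  have := H m d (ltnW mk); rewrite modn_small // => /pnet_arc ->.
  by rewrite IH ?addnS // ltnW.
have k0 : 0 < size V by [].
have k1 : (size V).-1 < size V by rewrite prednK.
have := H (size V).-1 d k1.
rewrite prednK // modnn /= => /pnet_arc.
rewrite (Hm (size V).-1) // => /eqP.
by rewrite -addnS prednK // -{1}(addn0 (index d p)) eqn_add2l.
Qed.

Definition ones : conf n := [ffun _ => true].

Lemma pnet_forcing : forcing pnet p ones.
Proof.
move=> i ip x Hx; rewrite pnetE ffunE.
case E: (index i p) Hx => [|k] // Hx.
have kp : k.+1 < size p by rewrite -E index_mem.
rewrite Hx ?ffunE //.
rewrite -(nth_take i (ltnSn k)); apply: mem_nth.
by rewrite size_takel // ltnW.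
Qed.

Lemma sync_p x : upd_word pnet p x = ones.
Proof.
apply/ffunP => j.
by apply: (sync U pnet_forcing (pre := [::]) (suf := p)) => //; rewrite ?subseq_refl ?cov.
Qed.

Lemma ones_fix : fixed_point pnet ones.
Proof. by apply/ffunP => i; rewrite pnetE ffunE; case: (index i p) => [|k] //; rewrite ffunE. Qed.

Lemma pnet_F : in_F pnet.
Proof.
split; last by move=> vs ss vs' ss' cy; case: (pnet_A cy).
exists ones; split; first exact: ones_fix.
by move=> x fx; rewrite -(fix_upd_word p fx) sync_p.
Qed.

Lemma pnet_Fplus : in_Fplus pnet.
Proof.
split; last by move=> vs ss cy; case: (pnet_A cy).
by exists p, ones; apply: sync_p.
Qed.

Lemma not_sync w : ~~ subseq p w -> ~ synchronizes w pnet.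
Proof.
move=> ns [c Hc].
have n0 : 0 < n.
  rewrite -sp lt0n size_eq0; apply: contraNneq ns => ->; exact: sub0seq.
pose i0 : 'I_n := Ordinal n0.
pose jl := nth i0 p n.-1.
have ijl : index jl p = n.-1 by rewrite index_uniq // sp prednK.
have key : forall (w : seq 'I_n) k (x : conf n), (forall j, k <= index j p -> x j = false) ->
    ~~ subseq (drop k p) w -> upd_word pnet w x jl = false.
  elim=> [|i w' IH] k x Hx ns'.
    have kp : k < size p.
      by rewrite ltnNge; apply/negP => kp; rewrite drop_oversize // in ns'.
    by apply: Hx; rewrite ijl -sp; lia.
  have kp : k < size p.
    by rewrite ltnNge; apply/negP => kp; rewrite drop_oversize // sub0seq in ns'.
  rewrite (drop_nth i0 kp) /= in ns'.
  case: (nth i0 p k =P i) ns' => [e|ne] ns'.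
    apply: (IH k.+1) => // j kj.
    rewrite /upd setcE; case: (j =P i) => [ji|_]; last by apply: Hx; lia.
    have : index j p = k by rewrite ji -e index_uniq.
    lia.
  apply: (IH k); last by rewrite (drop_nth i0 kp).
  move=> j kj; rewrite /upd setcE; case: (j =P i) => [ji|_]; last by apply: Hx.
  rewrite ji in kj; rewrite pnetE.
  have ik : index i p != k.
    by apply/eqP => ik; apply: ne; rewrite -ik nth_index // cov.
  case E: (index i p) ik kj => [|m] ik kj.
    by move: kj ik; rewrite leqn0 => /eqP ->.
  have mp : m < size p by have := cov i; rewrite -index_mem E => /ltnW.
  apply: Hx; rewrite index_uniq //.
  by rewrite -ltnS ltn_neqAle kj andbT eq_sym.
have := key w 0 [ffun _ => false] (fun j _ => ffunE _ _).
rewrite drop0 => /(_ ns); rewrite Hc.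
have := Hc ones; rewrite fix_upd_word; last exact: ones_fix.
by move=> <-; rewrite ffunE.
Qed.

End Counter.

Lemma bwd n (w : seq 'I_n) : ~ complete w ->
  exists f : BN n, [/\ in_A f, in_F f, in_Fplus f & ~ synchronizes w f].
Proof.
move=> nc.
have [p [U [sp ns]]] : exists p : seq 'I_n, uniq p /\ size p = n /\ ~~ subseq p w.
  apply: NNPP => H; apply: nc => p U sp; apply/negPn/negP => ns'.
  by apply: H; exists p.
exists (pnet p); split; [exact: pnet_A | exact: pnet_F | exact: pnet_Fplus | exact: not_sync].
Qed.

Theorem proposition10 (n : nat) (w : seq 'I_n) :
  (complete w <-> (forall f : BN n, in_F f -> synchronizes w f)) /\
  (complete w <-> (forall f : BN n, in_Fplus f -> synchronizes w f)) /\
  (complete w <-> (forall f : BN n, in_A f -> synchronizes w f)).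
Proof.
split; [|split]; split.
- by move=> C f Ff; apply: fwd C (ext_F Ff).
- move=> H; apply: NNPP => nc; have [f [_ Ff _ ns]] := bwd nc; exact: ns (H f Ff).
- by move=> C f Ff; apply: fwd C (ext_F (Fplus_F Ff)).
- move=> H; apply: NNPP => nc; have [f [_ _ Ff ns]] := bwd nc; exact: ns (H f Ff).
- by move=> C f Ff; apply: fwd C (ext_A Ff).
- move=> H; apply: NNPP => nc; have [f [Ff _ _ ns]] := bwd nc; exact: ns (H f Ff).
Qed.
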